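(* Let $T_1,T_2$ be $2\times 2$ matrices with entries in $\{0,1\}$, neither having a zero row, and let $\alpha_i=T_1^{(i)}\otimes T_2^{(i)}$ for $i=1,2$. If $|\alpha_1|=|\alpha_2|=1$, then $h(T)=0$.
   Context: $T_k^{(i)}$ denotes the $i$-th row of $T_k$, and for $v=(v_1,v_2)$, $w=(w_1,w_2)$ the dyadic product is $v\otimes w=(v_1w_1,v_1w_2,v_2w_1,v_2w_2)$; $|\alpha_i|$ is the sum of the entries of $\alpha_i$ (the number of ones). Define sequences $\gamma^{[s_j]}_{i,n}$ ($i,j\in\{1,2\}$, $n\ge0$) by $\gamma^{[s_j]}_{i,0}=1$ and, for $n\ge1$, $$\gamma^{[s_1]}_{i,n}=\sum_{j,k=1}^2T_1(i,j)T_2(i,k)\,\gamma^{[s_1]}_{j,n-1}\gamma^{[s_2]}_{k,n-1},\qquad \gamma^{[s_2]}_{i,n}=\sum_{j=1}^2T_1(i,j)\,\gamma^{[s_1]}_{j,n-1}.$$ (These are the paper's counts of admissible blocks with root symbol $i$ for the $G$-vertex shift $X_T=\{t\in\{1,2\}^G: T_k(t_g,t_{gs_k})=1\}$ on the monoid $G=\langle s_1,s_2\mid s_2s_2=s_2\rangle$.) Let $l_0=1$, $l_1=2$, $l_{k+1}=l_k+l_{k-1}$ and $|E_n|=\sum_{k=0}^n l_k$ (the number of elements of $G$ of word length at most $n$). The entropy is $h(T)=\limsup_{n\to\infty}\frac{\ln(\gamma^{[s_1]}_{1,n}+\gamma^{[s_1]}_{2,n})}{|E_n|}$. *)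

(* Defs.v *)
From mathcomp Require Import all_boot all_order all_algebra.
From mathcomp Require Import all_classical all_reals all_analysis.
Set Implicit Arguments. Unset Strict Implicit. Unset Printing Implicit Defensive.
Import Order.TTheory GRing.Theory Num.Theory.

(* 0/1 matrices are represented as 'M[nat]_2 with entries <= 1;
   index 0 of 'I_2 is symbol 1 of the paper, index 1 is symbol 2. *)

Definition zero_one_mx (T : 'M[nat]_2) : Prop := forall i j, T i j <= 1.
Definition no_zero_row (T : 'M[nat]_2) : Prop := forall i, exists j, T i j != 0.

Definition dyad (v w : 'I_2 -> nat) : seq nat :=
  [:: v ord0 * w ord0; v ord0 * w ord_max; v ord_max * w ord0; v ord_max * w ord_max].

Definition alpha (T1 T2 : 'M[nat]_2) (i : 'I_2) : seq nat :=
  dyad (fun j => T1 i j) (fun j => T2 i j).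

Definition abs_vec (a : seq nat) : nat := sumn a.

Fixpoint gamma (T1 T2 : 'M[nat]_2) (n : nat) : ('I_2 -> nat) * ('I_2 -> nat) :=
  match n with
  | 0 => (fun _ => 1, fun _ => 1)
  | n'.+1 =>
      let g := gamma T1 T2 n' in
      (fun i => \sum_(j < 2) \sum_(k < 2) T1 i j * T2 i k * g.1 j * g.2 k,
       fun i => \sum_(j < 2) T1 i j * g.1 j)
  end.

Definition gamma_s1 T1 T2 (i : 'I_2) n := (gamma T1 T2 n).1 i.
Definition gamma_s2 T1 T2 (i : 'I_2) n := (gamma T1 T2 n).2 i.

Fixpoint lseq (k : nat) : nat :=
  match k with
  | 0 => 1
  | 1 => 2
  | (k'.+1 as k1).+1 => lseq k1 + lseq k'
  end.

Definition cardE (n : nat) : nat := \sum_(0 <= k < n.+1) lseq k.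

Local Open Scope ring_scope.

Definition entropy (R : realType) (T1 T2 : 'M[nat]_2) : \bar R :=
  limn_esup (fun n : nat =>
    ((ln ((gamma_s1 T1 T2 ord0 n + gamma_s1 T1 T2 ord_max n)%N%:R : R))
      / (cardE n)%:R)%:E).

(* Main.v *)
Require Import Defs.
From mathcomp Require Import all_boot all_order all_algebra.
From mathcomp Require Import all_classical all_reals all_analysis.
From mathcomp Require Import zify.
Import numFieldNormedType.Exports.
Import Order.TTheory GRing.Theory Num.Theory.

Lemma ord2_cases (i : 'I_2) : i = ord0 \/ i = ord_max.
Proof. case: i => [[|[|m]] Hm]; [left|right|]; try exact: val_inj. by []. Qed.

Lemma row_sums (T1 T2 : 'M[nat]_2) i :
  abs_vec (alpha T1 T2 i) = 1%N ->
  (\sum_(j < 2) \sum_(k < 2) T1 i j * T2 i k = 1)%N.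
Proof.
move=> H; transitivity (abs_vec (alpha T1 T2 i)); last exact: H.
rewrite /abs_vec /alpha /dyad /= !big_ord_recr /= !big_ord0 /=.
have -> : widen_ord (leqnSn 1) ord_max = ord0 :> 'I_2 by apply: val_inj.
lia.
Qed.

Lemma gamma_one (T1 T2 : 'M[nat]_2) :
  abs_vec (alpha T1 T2 ord0) = 1%N -> abs_vec (alpha T1 T2 ord_max) = 1%N ->
  forall n i, (gamma T1 T2 n).1 i = 1%N /\ (gamma T1 T2 n).2 i = 1%N.
Proof.
move=> H0 H1; elim => [|n IH] i; first by [].
have Hs : forall i, (\sum_(j < 2) \sum_(k < 2) T1 i j * T2 i k = 1)%N.
  by move=> i'; case: (ord2_cases i') => ->; apply: row_sums.
have Hr : (\sum_(j < 2) T1 i j = 1)%N.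
  have : ((\sum_(j < 2) T1 i j) * (\sum_(k < 2) T2 i k) = 1)%N.
    transitivity (\sum_(j < 2) \sum_(k < 2) T1 i j * T2 i k)%N; last exact: Hs.
    rewrite big_distrl /=; apply: eq_bigr => j _; by rewrite big_distrr.
  by move/eqP; rewrite muln_eq1 => /andP[/eqP -> _].
simpl; split.
- transitivity (\sum_(j < 2) \sum_(k < 2) T1 i j * T2 i k)%N; last exact: Hs.
  apply: eq_bigr => j _; apply: eq_bigr => k _.
  by rewrite (proj1 (IH j)) (proj2 (IH k)) !muln1.
- transitivity (\sum_(j < 2) T1 i j)%N; last exact: Hr.
  apply: eq_bigr => j _; by rewrite (proj1 (IH j)) muln1.
Qed.

Lemma lseq_pos k : leq 1 (lseq k).
Proof. elim: k => [|[|k] IH] //=; by rewrite addn_gt0 IH. Qed.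

Lemma cardE_ge n : leq n.+1 (Defs.cardE n).
Proof.
rewrite /Defs.cardE; elim: n => [|n IH]; first by rewrite big_nat1.
rewrite big_nat_recr //.
have := lseq_pos n.+1. move: IH. set l := lseq n.+1. rewrite /=. lia.
Qed.

Local Open Scope ring_scope.

Theorem proposition1 (R : realType) (T1 T2 : 'M[nat]_2) :
  zero_one_mx T1 -> zero_one_mx T2 ->
  no_zero_row T1 -> no_zero_row T2 ->
  abs_vec (alpha T1 T2 ord0) = 1%N -> abs_vec (alpha T1 T2 ord_max) = 1%N ->
  entropy R T1 T2 = 0%E.
Proof.
move=> _ _ _ _ H0 H1.
have G := gamma_one T1 T2 H0 H1.
rewrite /entropy /gamma_s1.
under eq_fun do rewrite (proj1 (G _ _)) (proj1 (G _ _)).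
apply: (cvg_limn_einf_sup _).2.
apply: cvg_EFin; first exact: nearW.
apply: (@squeeze_cvgr _ _ _ _ (fun=> 0) (fun n => ln 2 * harmonic n)).
- apply: nearW => n /=.
  have ln2 : 0 <= ln (2:R) by rewrite ln_ge0 // ler1n.
  have cpos : (0 < (Defs.cardE n)%:R :> R) by rewrite ltr0n; apply: leq_trans (cardE_ge n).
  apply/andP; split; first by rewrite divr_ge0 // ltW.
  rewrite /harmonic /=; apply: ler_wpM2l => //.
  rewrite lef_pV2 ?posrE // ?ltr0n // ler_nat; exact: cardE_ge.
- exact: cvg_cst.
- rewrite -[X in (_ @ _ --> X)%classic](mulr0 (ln (2:R))); apply: cvgMl_tmp; exact: cvg_harmonic.
Qed.
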